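(* Let $\mathcal{C}$ be a fusion category and let $G(\mathcal{C})$ be the group of isomorphism classes of invertible simple objects. Suppose that $|G(\mathcal{C})|$ is a power of a prime $p$ and that $\gcd(|\mathrm{Irr}_\alpha(\mathcal{C})|, p) = 1$ for some $\alpha > 1$. Then there exists $X \in \mathrm{Irr}_\alpha(\mathcal{C})$ such that $G[X] = G(\mathcal{C})$.
   Context: $\mathrm{Irr}_\alpha(\mathcal{C})$ denotes the set of isomorphism classes of simple objects of $\mathcal{C}$ of Frobenius–Perron dimension $\alpha$. The group $G(\mathcal{C})$ acts on the set of isomorphism classes of simple objects by left tensor product, and $G[X]$ denotes the stabilizer of $X$ under this action (i.e. $\{g : g\otimes X\cong X\}$). *)

(* Defs.v *)
(* A fusion category is represented by its (based) fusion
   ring: the statement only concerns isomorphism classes of simple objects,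
   tensor multiplicities and Frobenius–Perron dimensions. *)
From HB Require Import structures.
From mathcomp Require Import all_boot all_order all_algebra.
Set Implicit Arguments. Unset Strict Implicit. Unset Printing Implicit Defensive.
Import Order.TTheory GRing.Theory Num.Theory.

(* Based fusion ring of a fusion category: [T] = isomorphism classes of simple
   objects, [one] = unit object, [dual] = duality, [N i j k] = multiplicity of
   the simple k in i (x) j. *)
Record fusion_ring := FusionRing {
  fr_T :> finType;
  fr_one : fr_T;
  fr_dual : fr_T -> fr_T;
  fr_N : fr_T -> fr_T -> fr_T -> nat;
  fr_unitl : forall j k, fr_N fr_one j k = (j == k);
  fr_unitr : forall i k, fr_N i fr_one k = (i == k);
  fr_assoc : forall i j k l,
    (\sum_m fr_N i j m * fr_N m k l = \sum_m fr_N j k m * fr_N i m l)%N;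
  fr_dualK : involutive fr_dual;
  fr_rigid_one : forall i j, fr_N i j fr_one = (j == fr_dual i);
  fr_recipl : forall i j k, fr_N i j k = fr_N (fr_dual i) k j;
  fr_recipr : forall i j k, fr_N i j k = fr_N k (fr_dual j) i
}.

Section FusionDefs.
Variable C : fusion_ring.

Definition tensor_iso (i j k : C) : Prop :=
  forall l, fr_N i j l = (l == k).

Definition invertibleb (X : C) : bool :=
  [forall l, fr_N X (fr_dual X) l == (l == fr_one C)].

Definition Ginv : {set C} := [set g | invertibleb g].

Definition stab (X : C) : {set C} :=
  [set g in Ginv | [forall l, fr_N g X l == (l == X)]].

(* d is the Frobenius–Perron dimension: the (unique) ring homomorphism from
   the fusion ring to the reals taking positive values on simple objects. *)
Definition is_FPdim (R : realFieldType) (d : C -> R) : Prop :=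
  (forall i, 0 < d i)%R /\
  (forall i j, d i * d j = \sum_k (fr_N i j k)%:R * d k)%R.

Definition Irr_of (R : realFieldType) (d : C -> R) (alpha : R) : {set C} :=
  [set X | d X == alpha].

End FusionDefs.

(* Main.v *)
Require Import Defs.
From mathcomp Require Import all_boot all_order all_fingroup all_solvable all_algebra.
From mathcomp Require Import zify.
Import Order.TTheory GRing.Theory Num.Theory.
Set Implicit Arguments. Unset Strict Implicit. Unset Printing Implicit Defensive.

Lemma sum_ind (I : finType) (k : I) (F : I -> nat) :
  (\sum_m (m == k) * F m = F k)%N.
Proof.
rewrite (bigD1 k) //= eqxx mul1n big1 ?addn0 // => m /negbTE ->.
by rewrite mul0n.
Qed.

Lemma sq_sum1 (I : finType) (f : I -> nat) :
  (\sum_m f m * f m = 1)%N -> exists m, forall l, f l = (l == m).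
Proof.
move=> H.
have [m Hm] : exists m, f m != 0%N.
  apply/existsP; apply: contraT; rewrite negb_exists => /forallP Hf.
  move: H; rewrite big1 // => i _; by move: (Hf i); rewrite negbK => /eqP ->.
exists m.
move: H; rewrite (bigD1 m) //= => H.
have Hm1 : f m = 1%N.
  move: Hm H; case: (f m) => [|[|k]] //= _; rewrite !mulSn; lia.
move: H; rewrite Hm1 muln1 => /eqP; rewrite eqSS => /eqP H0.
have := sum_nat_eq0 (fun i => i != m) (fun i => f i * f i).
rewrite H0 eqxx => /esym /forallP Hall l.
case: (eqVneq l m) => [->|ne] //.
move: (Hall l); rewrite ne /= muln_eq0 orbb => /eqP ->; done.
Qed.

Lemma natbT (b : bool) : nat_of_bool b = nat_of_bool true -> b.
Proof. by case: b. Qed.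

Lemma inGP (C : fusion_ring) (g : C) :
  reflect (forall l, fr_N g (fr_dual g) l = (l == fr_one C)) (g \in Ginv C).
Proof.
rewrite inE /invertibleb; apply: (iffP forallP) => H l.
  exact/eqP/H.
by rewrite H.
Qed.

Lemma L1 (C : fusion_ring) (g : C) : g \in Ginv C ->
  forall Z, exists m, forall l, fr_N (fr_dual g) Z l = (l == m).
Proof.
move=> /inGP Hg Z; apply: sq_sum1.
have -> : 1%N = fr_N (fr_one C) Z Z by rewrite fr_unitl eqxx.
rewrite -(sum_ind (fr_one C) (fun m => fr_N m Z Z)).
have -> : (\sum_m (m == fr_one C) * fr_N m Z Z = \sum_m fr_N g (fr_dual g) m * fr_N m Z Z)%N
  by apply: eq_bigr => m _; rewrite Hg.
rewrite fr_assoc.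
apply: eq_bigr => m _; by rewrite [fr_N g m Z]fr_recipl.
Qed.

Lemma L2 (C : fusion_ring) (g : C) : g \in Ginv C -> fr_dual g \in Ginv C.
Proof.
move=> Hg; have [m Hm] := L1 Hg g.
have : fr_N (fr_dual g) g (fr_one C) = true by rewrite fr_rigid_one fr_dualK eqxx.
rewrite Hm; case: eqP => // E _; subst m.
apply/inGP => l; by rewrite fr_dualK Hm.
Qed.

Lemma L3 (C : fusion_ring) (g : C) : g \in Ginv C ->
  forall Z, exists m, forall l, fr_N g Z l = (l == m).
Proof.
move=> Hg Z; have := L1 (L2 Hg) Z; by rewrite fr_dualK.
Qed.

Definition act (C : fusion_ring) (g X : C) : C :=
  if g \in Ginv C then odflt X [pick m | fr_N g X m == 1%N] else X.

Lemma actE (C : fusion_ring) (g : C) : g \in Ginv C ->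
  forall X l, fr_N g X l = (l == act g X).
Proof.
move=> Hg X; have [m Hm] := L3 Hg X.
suff -> : act g X = m by [].
rewrite /act Hg; case: pickP => [y|] /=.
  by rewrite Hm; case: (eqVneq y m).
by move=> /(_ m); rewrite Hm eqxx.
Qed.

Lemma one_inG (C : fusion_ring) : fr_one C \in Ginv C.
Proof.
have Hd : fr_dual (fr_one C) = fr_one C.
  have := fr_rigid_one (fr_one C) (fr_one C).
  rewrite fr_unitl eqxx; case: eqVneq => [E|] // _; by rewrite -E.
apply/inGP => l; by rewrite Hd fr_unitl eq_sym.
Qed.

Lemma act1 (C : fusion_ring) (X : C) : act (fr_one C) X = X.
Proof.
have := actE (one_inG C) X (act (fr_one C) X).
by rewrite fr_unitl eqxx => /natbT/eqP.
Qed.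

Lemma actg1 (C : fusion_ring) (g : C) : g \in Ginv C -> act g (fr_one C) = g.
Proof.
move=> Hg; have := actE Hg (fr_one C) g.
by rewrite fr_unitr eqxx => /esym/natbT/eqP.
Qed.

Lemma actM (C : fusion_ring) (g h : C) : g \in Ginv C -> h \in Ginv C ->
  (forall X l, fr_N (act g h) X l = (l == act g (act h X))).
Proof.
move=> Hg Hh X l.
rewrite -(sum_ind (act g h) (fun m => fr_N m X l)).
have -> : (\sum_m (m == act g h) * fr_N m X l = \sum_m fr_N g h m * fr_N m X l)%N
  by apply: eq_bigr => m _; rewrite (actE Hg h).
rewrite fr_assoc.
have -> : (\sum_m fr_N h X m * fr_N g m l = \sum_m (m == act h X) * fr_N g m l)%N
  by apply: eq_bigr => m _; rewrite (actE Hh X).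
by rewrite (sum_ind (act h X) (fun m => fr_N g m l)) (actE Hg).
Qed.

Lemma actM_inG (C : fusion_ring) (g h : C) : g \in Ginv C -> h \in Ginv C ->
  act g h \in Ginv C.
Proof.
move=> Hg Hh; set k := act g h.
have H1 := actM Hg Hh (fr_dual k).
have : fr_N k (fr_dual k) (fr_one C) = true by rewrite fr_rigid_one eqxx.
rewrite H1 => /natbT/eqP E.
apply/inGP => l; by rewrite H1 -E.
Qed.

Lemma actA (C : fusion_ring) (g h X : C) : g \in Ginv C -> h \in Ginv C ->
  act g (act h X) = act (act g h) X.
Proof.
move=> Hg Hh.
have := actM Hg Hh X (act (act g h) X).
by rewrite (actE (actM_inG Hg Hh)) eqxx => /esym/natbT/eqP.
Qed.

Lemma act_inj (C : fusion_ring) (g : C) : injective (act g).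
Proof.
case Hg: (g \in Ginv C); last by move=> x y; rewrite /act Hg.
have Hd := L2 Hg.
have E : act (fr_dual g) g = fr_one C.
  have := actE Hd g (fr_one C).
  by rewrite fr_rigid_one fr_dualK eqxx => /esym/natbT/eqP.
move=> x y Hxy.
have K z : act (fr_dual g) (act g z) = z by rewrite (actA _ Hd Hg) E act1.
by rewrite -(K x) Hxy K.
Qed.

Definition sigm (C : fusion_ring) (g : C) : {perm C} := perm (@act_inj C g).

Definition Pset (C : fusion_ring) : {set {perm C}} := [set sigm g | g in Ginv C].

Lemma Pgroup_set (C : fusion_ring) : group_set (Pset C).
Proof.
apply/group_setP; split.
  apply/imsetP; exists (fr_one C); first exact: one_inG.
  by apply/permP => x; rewrite perm1 /sigm permE act1.
move=> s t /imsetP [g Hg ->] /imsetP [h Hh ->].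
apply/imsetP; exists (act h g); first exact: actM_inG.
apply/permP => x; by rewrite permM /sigm !permE actA.
Qed.

Canonical PG (C : fusion_ring) := Group (Pgroup_set C).

Local Open Scope ring_scope.

Lemma dg1 (C : fusion_ring) (R : realFieldType) (d : C -> R) :
  is_FPdim d -> forall g, g \in Ginv C -> d g = 1.
Proof.
move=> [pos mul] g Hg.
have Hact X : d (act g X) = d g * d X.
  rewrite mul; under eq_bigr do rewrite (actE Hg).
  rewrite (bigD1 (act g X)) //= eqxx mul1r big1 ?addr0 // => i /negbTE ->.
  by rewrite mul0r.
set S := \sum_X d X.
have S0 : 0 < S by rewrite /S (bigD1 (fr_one C)) //=; apply: ltr_wpDr;
  [apply: sumr_ge0 => i _; exact: ltW | exact: pos].
have : S = d g * S.
  rewrite {1}/S (reindex_inj (@act_inj C g)) /= mulr_sumr.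
  by apply: eq_bigr => X _; rewrite Hact.
move=> /eqP; rewrite -subr_eq0 -{1}[S]mul1r -mulrBl mulf_eq0 (gt_eqF S0) orbF.
by rewrite subr_eq0 eq_sym => /eqP.
Qed.

Theorem lemma2p1 (C : fusion_ring) (R : realFieldType) (d : C -> R)
  (hd : is_FPdim d) (p n : nat) (hp : prime p)
  (hG : #|Ginv C| = (p ^ n)%N)
  (alpha : R) (halpha : (1 < alpha)%R)
  (hcop : coprime #|Irr_of d alpha| p) :
  exists2 X : C, X \in Irr_of d alpha & stab X = Ginv C.
Proof.
have cardP : #|PG C| = #|Ginv C|.
  rewrite /= card_in_imset // => g h Hg Hh E.
  by rewrite -(actg1 Hg) -(actg1 Hh) -!(permE (@act_inj C _)) -/(sigm _ _) E.
have pP : pgroup p (PG C) by rewrite /pgroup cardP hG pnatX pnat_id ?orbT.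
have Hacts : [acts PG C, on Irr_of d alpha | 'P].
  apply/actsP => s /imsetP [g Hg ->] X /=.
  rewrite /aperm permE !inE.
  have [pos mul] := hd.
  suff -> : d (act g X) = d X by [].
  rewrite -[d X]mul1r -(dg1 hd Hg) mul; under eq_bigr do rewrite (actE Hg).
  rewrite (bigD1 (act g X)) //= eqxx mul1r big1 ?addr0 // => i /negbTE ->.
  by rewrite mul0r.
have Hmod := pgroup_fix_mod pP Hacts.
have [X HX] : exists X, X \in ('Fix_(Irr_of d alpha | 'P)(PG C))%g.
  case: (set_0Vmem ('Fix_(Irr_of d alpha | 'P)(PG C))%g) => [E|[X HX]]; last by exists X.
  exfalso.
  move: Hmod; rewrite E cards0 mod0n => /eqP; rewrite -/(dvdn p _) => Hdvd.
  move: hcop; rewrite /coprime gcdnC (gcdn_idPl Hdvd) => /eqP Hp1.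
  by move: hp; rewrite Hp1.
move: HX => /setIP [HXI /afixP Hfix].
exists X => //.
apply/setP => g; rewrite /stab inE.
case Hg: (g \in Ginv C) => //=.
apply/forallP => l.
have := Hfix (sigm g) (imset_f _ Hg); rewrite /= /aperm permE => E.
by rewrite (actE Hg) E.
Qed.
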